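(* For every $n\geq 1$, in the field $\mathbb{Q}(t)$, $$B_{n+1}(t)=A_n(t)B_n(t)-B_{n-1}(t),\qquad\text{where } A_n(t)=t^{-\mu(n)}\left(2\,\frac{t^{\mu(n)}-1}{t-1}+t\right).$$
   Context: The Stern polynomials $B_n(t)\in\mathbb{Z}[t]$ are defined by $B_0(t)=0$, $B_1(t)=1$, and for $n\geq 1$: $B_{2n}(t)=tB_n(t)$, $B_{2n+1}(t)=B_n(t)+B_{n+1}(t)$. For $n\geq 1$, $\mu(n)$ denotes the exponent of the highest power of $2$ dividing $n$. Note $\frac{t^{m}-1}{t-1}=1+t+\dots+t^{m-1}$ (equal to $0$ for $m=0$). *)

(* Defs.v *)
From HB Require Import structures.
From mathcomp Require Import all_boot all_order all_algebra.
Set Implicit Arguments. Unset Strict Implicit. Unset Printing Implicit Defensive.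
Import Order.TTheory GRing.Theory Num.Theory.
Local Open Scope ring_scope.

(* Stern polynomials B_n(t) in Z[t], computed with fuel k (k > n suffices). *)
Fixpoint stern_aux (k n : nat) : {poly int} :=
  match k with
  | 0 => 0
  | k'.+1 =>
    if n is 0 then 0 else
    if n == 1%N then 1 else
    if odd n then stern_aux k' n./2 + stern_aux k' (n./2).+1
    else 'X * stern_aux k' n./2
  end.

Definition stern (n : nat) : {poly int} := stern_aux n.+1 n.

Definition mu (n : nat) : nat := logn 2 n.

Definition Qt := {fraction {poly rat}}.
Definition toQt (p : {poly int}) : Qt := tofrac (map_poly intr p).
Definition tQ : Qt := toQt 'X.

(* Main.v *)
Require Import Defs.
From HB Require Import structures.
From mathcomp Require Import all_boot all_order all_algebra.
From Stdlib Require Import Lia Ring.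
Import GRing.Theory Num.Theory.
Local Open Scope ring_scope.

Lemma half_bounds m : (2 <= m)%N -> (m./2 < m.-1)%N \/ (odd m = false /\ m./2 < m)%N.
Proof.
move=> hm; have e := odd_double_half m.
move: hm e; set h := m./2; case: (odd m) => /= hm e; rewrite -e -addnn.
- left; apply/ltP; move/leP: hm; rewrite -e -addnn /= -!plusE; lia.
- right; split => //; apply/ltP; move/leP: hm; rewrite -e -addnn -!plusE; lia.
Qed.

Lemma stern_fuel k1 k2 n : (n < k1)%N -> (n < k2)%N -> stern_aux k1 n = stern_aux k2 n.
Proof.
elim: k1 k2 n => [|k1 IH] [|k2] n //= h1 h2.
case: n h1 h2 => [|n] h1 h2 //.
case: ifP => // hn1.
have h2le : (2 <= n.+1)%N by case: n hn1 {h1 h2}.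
have hl : (n.+1./2 < n.+1)%N.
  by case: (half_bounds _ h2le) => [H|[_ H]] //; apply: (leq_trans H).
have hk1 : (n.+1./2 < k1)%N by exact: leq_trans hl h1.
have hk2 : (n.+1./2 < k2)%N by exact: leq_trans hl h2.
case: (half_bounds _ h2le) => [H|[Ho H]].
- have hk1' : (n.+1./2.+1 < k1)%N by exact: leq_ltn_trans H h1.
  have hk2' : (n.+1./2.+1 < k2)%N by exact: leq_ltn_trans H h2.
  by rewrite (IH k2) // (IH k2 (n.+1./2).+1).
- by rewrite Ho (IH k2).
Qed.

Lemma stern_auxS k n : stern_aux k.+1 n =
  if n is 0 then 0 else if n == 1%N then 1 else
  if odd n then stern_aux k n./2 + stern_aux k (n./2).+1 else 'X * stern_aux k n./2.
Proof. by []. Qed.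

Lemma sternE n : (2 <= n)%N -> stern n =
  if odd n then stern n./2 + stern (n./2).+1 else 'X * stern n./2.
Proof.
move=> h2; rewrite /stern stern_auxS.
case: n h2 => [|n] // h2.
have -> : (n.+1 == 1%N) = false by case: n h2.
have hl : (n.+1./2 < n.+1)%N.
  by case: (half_bounds _ h2) => [H|[_ H]] //; apply: (leq_trans H).
rewrite (stern_fuel n.+1 (n.+1./2).+1) //.
case: (half_bounds _ h2) => [H|[Ho H]].
- by rewrite (stern_fuel n.+1 (n.+1./2).+2).
- by rewrite Ho.
Qed.

Lemma stern_even k : stern (k.*2) = 'X * stern k.
Proof.
case: k => [|k]; first by rewrite /stern /= mulr0.
by rewrite sternE ?odd_double ?doubleK // -addnn addSn addnS.
Qed.

Lemma stern_odd k : stern (k.*2.+1) = stern k + stern k.+1.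
Proof.
case: k => [|k]; first by rewrite /stern /= add0r.
rewrite sternE /= ?odd_double /= ?uphalf_double ?doubleK //.
Qed.

Lemma mu_odd k : mu (k.*2.+1) = 0%N.
Proof. by rewrite /mu lognE dvdn2 /= odd_double. Qed.

Lemma mu_even k : mu (k.+1.*2) = (mu k.+1).+1.
Proof. by rewrite /mu lognE dvdn2 odd_double /= -mul2n mulKn. Qed.

Definition Sg (m : nat) : {poly int} := \sum_(i < m) 'X^i.

Lemma key n : (1 <= n)%N ->
  'X^(mu n) * (stern n.+1 + stern n.-1) = (2%:R * Sg (mu n) + 'X) * stern n.
Proof.
elim/ltn_ind: n => n IH hn.
have e := odd_double_half n.
move: e IH hn; set k := n./2; case: (odd n) => /= e IH hn; rewrite -e.
- rewrite add1n mu_odd -doubleS !stern_even stern_odd /Sg big_ord0 expr0 mul1r.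
  by rewrite mulr0 add0r mulrDr addrC.
- rewrite add0n.
  case: k e => [|j] e; first by rewrite -e in hn.
  rewrite mu_even -[j.+1.*2.+1]/(j.+1.*2.+1) stern_odd doubleS /= -doubleS stern_odd.
  rewrite stern_even.
  have IHj := IH j.+1.
  have hj : (j.+1 < n)%N by rewrite -e add0n -addnn addSn ltnS leq_addl.
  move: (IHj hj isT) => /=; set m := mu j.+1.
  set b := stern j.+1; set c := stern j.+2; set d := stern j => H.
  rewrite exprS -mulrA.
  have -> : b + c + (d + b) = (c + d) + 2%:R * b.
    by rewrite mulr_natl mulr2n [RHS]addrACA (addrC c b).
  rewrite mulrDr H /Sg big_ord_recr /= -/(Sg m).
  rewrite [RHS]mulrCA; congr (_ * _).
  rewrite [2%:R * (_ + _)]mulrDr [2%:R * Sg m + _ + 'X]addrAC [RHS]mulrDl; congr (_ + _).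
  by rewrite mulrCA mulrA.
Qed.

Lemma toQtD p q : toQt (p + q) = toQt p + toQt q.
Proof. by rewrite /toQt !rmorphD. Qed.
Lemma toQtM p q : toQt (p * q) = toQt p * toQt q.
Proof. by rewrite /toQt !rmorphM. Qed.
Lemma toQtX p m : toQt (p ^+ m) = toQt p ^+ m.
Proof. by rewrite /toQt !rmorphXn. Qed.
Lemma toQtn m : toQt m%:R = m%:R.
Proof. by rewrite /toQt !rmorph_nat. Qed.
Lemma toQtS m : toQt (Sg m) = \sum_(i < m) tQ ^+ i.
Proof. by rewrite /toQt /Sg !rmorph_sum; apply: eq_bigr => i _; rewrite !rmorphXn. Qed.

Lemma tQ_neq0 : tQ != 0.
Proof. by rewrite /tQ /toQt tofrac_eq0 map_polyX polyX_eq0. Qed.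
Lemma tQ1_neq0 : tQ - 1 != 0.
Proof.
rewrite /tQ /toQt -tofrac1 -tofracB tofrac_eq0 map_polyX -polyC1.
exact/negbT/polyXsubC_eq0.
Qed.

Theorem mainTheorem12 (n : nat) (hn : (1 <= n)%N) :
  toQt (stern n.+1) =
  (tQ ^- mu n * (2 * ((tQ ^+ mu n - 1) / (tQ - 1)) + tQ)) * toQt (stern n)
  - toQt (stern n.-1).
Proof.
have K := congr1 toQt (key _ hn).
rewrite !(toQtM, toQtD, toQtX, toQtS) -/tQ in K.
have t1 : toQt 1 = 1 by rewrite /toQt rmorph1 tofrac1.
rewrite t1 -mulr2n in K.
have hS : (tQ ^+ mu n - 1) / (tQ - 1) = \sum_(i < mu n) tQ ^+ i.
  by rewrite subrX1 mulrC mulKf // tQ1_neq0.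
rewrite hS -mulrA -K mulrA mulVf ?mul1r ?addrK //.
by rewrite expf_neq0 // tQ_neq0.
Qed.
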